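(* Let $\Phi$ be a randomized learning algorithm that maps a dataset to a feature extractor and is $(\epsilon_{\mathrm{DP}},\delta_{\mathrm{DP}})$-differentially private. For each feature extractor $\phi$, let $A(\cdot,\phi)$ be the algorithm that trains a linear model on the features produced by $\phi$ by minimizing the perturbed loss $L_{\mathbf{b}}$, and let $M$ be a removal mechanism that guarantees $(\epsilon_{\mathrm{CR}},\delta_{\mathrm{CR}})$-certified removal for $A(\cdot,\phi)$. Then the entire procedure (training $\phi=\Phi(\mathcal{D})$, training $A(\mathcal{D},\phi)$, and removing $\mathbf{x}\in\mathcal{D}$ via $M$, compared against $A(\mathcal{D}\setminus\mathbf{x},\Phi(\mathcal{D}\setminus\mathbf{x}))$) guarantees $(\epsilon_{\mathrm{DP}}+\epsilon_{\mathrm{CR}},\delta_{\mathrm{DP}}+\delta_{\mathrm{CR}})$-certified removal.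
   Context: $L_{\mathbf{b}}(\mathbf{w};\mathcal{D})=\sum_{i}\ell(\mathbf{w}^\top\phi(\mathbf{x}_i),y_i)+\frac{\lambda n}{2}\|\mathbf{w}\|_2^2+\mathbf{b}^\top\mathbf{w}$ with random $\mathbf{b}$. A randomized algorithm $\Phi$ is $(\epsilon,\delta)$-differentially private if for all datasets $\mathcal{D},\mathcal{D}''$ differing in one sample and all measurable sets $S$, $P(\Phi(\mathcal{D})\in S)\le e^{\epsilon}P(\Phi(\mathcal{D}'')\in S)+\delta$. For a randomized learning algorithm $A$ with model space $\mathcal{H}$ and a removal mechanism $M(A(\mathcal{D}),\mathcal{D},\mathbf{x})$, $M$ is $(\epsilon,\delta)$-certified removal for $A$ if for all measurable $\mathcal{T}\subseteq\mathcal{H}$, all datasets $\mathcal{D}$ and all $\mathbf{x}\in\mathcal{D}$: $P(M(A(\mathcal{D}),\mathcal{D},\mathbf{x})\in\mathcal{T})\le e^{\epsilon}P(A(\mathcal{D}\setminus\mathbf{x})\in\mathcal{T})+\delta$ and $P(A(\mathcal{D}\setminus\mathbf{x})\in\mathcal{T})\le e^{\epsilon}P(M(A(\mathcal{D}),\mathcal{D},\mathbf{x})\in\mathcal{T})+\delta$. *)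

(* Defs.v *)
From HB Require Import structures.
From mathcomp Require Import all_boot all_order all_algebra.
From mathcomp Require Import all_classical all_reals all_analysis.
Set Implicit Arguments. Unset Strict Implicit. Unset Printing Implicit Defensive.
Import Order.TTheory GRing.Theory Num.Theory.
Local Open Scope ring_scope.
Local Open Scope ereal_scope.

(* Datasets are finite sequences of samples of type X.
   D \ x  is  rem x D  (remove one occurrence of x). *)
Definition dremove (X : eqType) (D : seq X) (x : X) : seq X := rem x D.

Definition differ_in_one (X : eqType) (D D'' : seq X) : Prop :=
  exists x, (x \in D /\ perm_eq D'' (rem x D)) \/ (x \in D'' /\ perm_eq D (rem x D'')).

Definition differentially_private (X : eqType) d (F : measurableType d)
    (R : realType) (Phi : seq X -> probability F R) (eps delta : R) : Prop :=
  forall D D'' : seq X, differ_in_one D D'' ->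
  forall S : set F, measurable S ->
    Phi D S <= (expR eps)%:E * Phi D'' S + delta%:E.

(* (eps, delta)-certified removal, stated on output distributions:
   PM D x = distribution of M(A(D), D, x), PA D = distribution of A(D). *)
Definition certified_removal (X : eqType) d (H : measurableType d) (R : realType)
    (PM : seq X -> X -> set H -> \bar R) (PA : seq X -> set H -> \bar R)
    (eps delta : R) : Prop :=
  forall (T : set H), measurable T ->
  forall (D : seq X) (x : X), x \in D ->
    PM D x T <= (expR eps)%:E * PA (dremove D x) T + delta%:E /\
    PA (dremove D x) T <= (expR eps)%:E * PM D x T + delta%:E.

(* For a fixed feature extractor phi:
   A D : R.-pker F ~> H, (A D) phi = distribution of A(D, phi);
   M D x : R.-pker (F * H) ~> H, (M D x) (phi, h) = distribution of the
   removal mechanism applied to model h (trained on features phi), D and x. *)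
Definition A_phi (X : eqType) d d' (F : measurableType d) (H : measurableType d')
    (R : realType) (A : seq X -> R.-pker F ~> H) (phi : F) :
    seq X -> set H -> \bar R := fun D T => A D phi T.

Definition M_phi (X : eqType) d d' (F : measurableType d) (H : measurableType d')
    (R : realType) (A : seq X -> R.-pker F ~> H)
    (M : seq X -> X -> R.-pker (F * H) ~> H) (phi : F) :
    seq X -> X -> set H -> \bar R :=
  fun D x T => \int[A D phi]_h M D x (phi, h) T.

Definition full_removal (X : eqType) d d' (F : measurableType d)
    (H : measurableType d') (R : realType) (Phi : seq X -> probability F R)
    (A : seq X -> R.-pker F ~> H) (M : seq X -> X -> R.-pker (F * H) ~> H) :
    seq X -> X -> set H -> \bar R :=
  fun D x T => \int[Phi D]_phi M_phi A M phi D x T.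

Definition full_train (X : eqType) d d' (F : measurableType d)
    (H : measurableType d') (R : realType) (Phi : seq X -> probability F R)
    (A : seq X -> R.-pker F ~> H) : seq X -> set H -> \bar R :=
  fun D T => \int[Phi D]_phi A D phi T.

(* Main.v *)
Require Import Defs.
From HB Require Import structures.
From mathcomp Require Import all_boot all_order all_algebra.
From mathcomp Require Import all_classical all_reals all_analysis.
From mathcomp Require Import measurable_realfun.
Import Order.TTheory GRing.Theory Num.Theory.
Local Open Scope ring_scope.

Section Helpers.
Local Set Implicit Arguments. Local Unset Strict Implicit.
Lemma count_floor (R : realType) (t : R) (n : nat) : 0 <= t ->
  let c := (\sum_(k < n) (nat_of_bool ((k.+1)%:R <= t)%R))%N in
  c%:R <= t /\ (t < c%:R + 1 \/ c = n).
Proof.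
move=> t0; elim: n => [|n [IH1 IH2]] /=.
  by rewrite big_ord0; split => //; right.
rewrite big_ord_recr /=.
set c := (\sum_(i < n) _)%N in IH1 IH2 *.
case: IH2 => [tc|cn].
- have -> : ((n.+1)%:R <= t) = false.
    apply/negbTE; rewrite -ltNge; apply: (lt_le_trans tc).
    have : (c <= n)%N.
      rewrite /c; apply: (@leq_trans (\sum_(i < n) 1)%N).
        by apply: leq_sum => i _; exact: leq_b1.
      by rewrite sum1_card card_ord.
    by rewrite natr1 ler_nat ltnS.
  by rewrite addn0; split => //; left.
- case: (boolP ((n.+1)%:R <= t)) => h.
    by rewrite cn addn1; split => //; right.
  rewrite addn0; split => //; left; rewrite cn natr1; by rewrite ltNge.
Qed.

Local Open Scope classical_set_scope.
Local Open Scope ereal_scope.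



Lemma dp_fun_N d (F : measurableType d) (R : realType) (P Q : probability F R) (a del : R)
  (hPQ : forall S, measurable S -> P S <= (expR a)%:E * Q S + del%:E)
  (u : F -> \bar R) (mu : measurable_fun setT u) (u0 : forall x, 0 <= u x)
  (u1 : forall x, u x <= 1) (n : nat) :
  \int[P]_x u x <= (expR a)%:E * \int[Q]_x u x + del%:E + ((n.+1)%:R^-1)%:E.
Proof.
set N := n.+1.
have N0 : (0 < N%:R :> R)%R by rewrite ltr0n.
pose E k := [set x : F | ((k.+1)%:R / N%:R)%:E <= u x].
have mE k : measurable (E k).
  by have := emeasurable_fun_c_infty measurableT mu ((k.+1)%:R / N%:R)%:E; rewrite setTI.
pose s x := \sum_(k < N) (N%:R^-1 : R)%:E * (\1_(E k) x)%:E.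
have us x : s x <= u x /\ u x <= s x + (N%:R^-1)%:E.
  have ufin : u x \is a fin_num by rewrite ge0_fin_numE // (le_lt_trans (u1 x)) // ltey.
  set r := fine (u x).
  have ur : u x = r%:E by rewrite fineK.
  have r0 : (0 <= r)%R by rewrite -lee_fin -ur.
  have r1 : (r <= 1)%R by rewrite -lee_fin -ur.
  have [h1 h2] := @count_floor R _ N (mulr_ge0 (ltW N0) r0).
  move: h1 h2; set c := (\sum_(_ < _) _)%N => h1 h2.
  have sE : s x = (N%:R^-1 * c%:R)%:E.
    transitivity (\sum_(k < N) ((N%:R^-1 : R) * (nat_of_bool ((k.+1)%:R <= N%:R * r)%R)%:R)%:E).
      apply: eq_bigr => k _; rewrite EFinM /indic /E /=.
      have -> : (x \in E k) = ((k.+1)%:R <= N%:R * r)%R; last by [].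
      apply/idP/idP; rewrite inE /E /= ur lee_fin ler_pdivrMr // mulrC //.
    by rewrite sumEFin -mulr_sumr natr_sum.
  rewrite sE ur !lee_fin; split.
    by rewrite ler_pdivrMl.
  apply: (@le_trans _ _ (N%:R^-1 * (N%:R * r))%R).
    by rewrite mulrA mulVf ?mul1r // gt_eqF.
  rewrite -[X in (_ <= _ + X)%R]mulr1 -mulrDr ler_wpM2l // ?invr_ge0 ?ler0n //.
  case: h2 => [h2|cn]; first exact: ltW.
  rewrite cn; apply: (@le_trans _ _ (N%:R * 1)%R); first by rewrite ler_wpM2l // ler0n.
  by rewrite mulr1 lerDl.
have mind k : measurable_fun setT (fun x => (\1_(E k) x)%:E : \bar R).
  by apply/measurable_EFinP; exact: measurable_indic.
have mterm k : measurable_fun setT (fun x => (N%:R^-1 : R)%:E * (\1_(E k) x)%:E).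
  exact: measurable_funeM.
have ms : measurable_fun setT s by apply: emeasurable_sum => k; exact: mterm.
have Ninv0 : (0 <= (N%:R^-1 : R))%R by rewrite invr_ge0 ler0n.
have int_s (m : probability F R) :
    \int[m]_x s x = (\sum_(k < N) N%:R^-1 * fine (m (E k)))%:E.
  rewrite ge0_integral_sum //; try by move=> k x _; rewrite mule_ge0 // lee_fin.
  rewrite -sumEFin; apply: eq_bigr => k _.
  rewrite ge0_integralZl //; try by move=> *; rewrite lee_fin.
  rewrite integral_indic // setIT EFinM fineK //.
  by rewrite ge0_fin_numE // (le_lt_trans (probability_le1 _ _)) ?ltey.
have s0 x : 0 <= s x by apply: sume_ge0 => k _; rewrite mule_ge0 // lee_fin.
apply: (@le_trans _ _ (\int[P]_x (s x + (N%:R^-1 : R)%:E))).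
  apply: ge0_le_integral => //; last by move=> x _; exact: (us x).2.
  exact: emeasurable_funD.
rewrite ge0_integralD //; try by move=> x _; rewrite lee_fin.
rewrite integral_cst //.
set pm := (X in (_%:E * X)%E).
have -> : pm = 1 by rewrite /pm; exact: probability_setT.
rewrite mule1 int_s.
apply: leeD2r.
pose pP k := fine (P (E k)); pose pQ k := fine (Q (E k)).
have finm (m : probability F R) k : m (E k) \is a fin_num.
  by rewrite ge0_fin_numE // (le_lt_trans (probability_le1 _ _)) ?ltey.
have hk k : (pP k <= expR a * pQ k + del)%R.
  by rewrite -lee_fin EFinD EFinM /pP /pQ !fineK //; exact: hPQ.
apply: (@le_trans _ _ ((expR a)%:E * \int[Q]_x s x + del%:E)); last first.
  apply: leeD2r; rewrite lee_wpmul2l ?lee_fin ?expR_ge0 //.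
  by apply: ge0_le_integral => // x _; exact: (us x).1.
rewrite int_s -EFinM -EFinD lee_fin.
apply: (@le_trans _ _ (\sum_(k < N) (expR a * (N%:R^-1 * pQ k) + N%:R^-1 * del))%R).
  apply: ler_sum => k _; rewrite mulrCA -mulrDr ler_wpM2l //; exact: hk.
rewrite big_split /= -mulr_sumr sumr_const card_ord.
rewrite -mulrnAl -(mulr_natr (N%:R^-1 : R) N) mulVf ?mul1r // ?gt_eqF //.
Qed.

Lemma dp_fun d (F : measurableType d) (R : realType) (P Q : probability F R) (a del : R)
  (hPQ : forall S, measurable S -> P S <= (expR a)%:E * Q S + del%:E)
  (u : F -> \bar R) (mu : measurable_fun setT u) (u0 : forall x, 0 <= u x)
  (u1 : forall x, u x <= 1) :
  \int[P]_x u x <= (expR a)%:E * \int[Q]_x u x + del%:E.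
Proof.
apply/lee_addgt0Pr => e e0.
pose n := Num.truncn (e^-1).
apply: (le_trans (dp_fun_N hPQ mu u0 u1 n)).
apply: leeD2l; rewrite lee_fin -[X in (_ <= X)%R]invrK lef_pV2 ?posrE ?invr_gt0 ?ltr0n //.
exact/ltW/truncnS_gt.
Qed.

Lemma key d (F : measurableType d) (R : realType) (P Q : probability F R) (a b d1 d2 : R)
  (hPQ : forall S, measurable S -> P S <= (expR a)%:E * Q S + d1%:E)
  (g f : F -> \bar R) (mg : measurable_fun setT g) (mf : measurable_fun setT f)
  (g0 : forall x, 0 <= g x) (g1 : forall x, g x <= 1) (f0 : forall x, 0 <= f x)
  (d20 : (0 <= d2)%R) (hgf : forall x, g x <= (expR b)%:E * f x + d2%:E) :
  \int[P]_x g x <= (expR (a + b))%:E * \int[Q]_x f x + (d1 + d2)%:E.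
Proof.
pose v x := mine 1 ((expR b)%:E * f x).
have mv : measurable_fun setT v.
  by apply: measurable_mine => //; exact: measurable_funeM.
have v0 x : 0 <= v x by rewrite /v le_min lee01 mule_ge0 // lee_fin expR_ge0.
have v1 x : v x <= 1 by rewrite /v ge_min lexx.
have gv x : g x <= v x + d2%:E.
  rewrite /v /mine; case: ifP => _; last exact: hgf.
  by apply: (le_trans (g1 x)); rewrite leeDl // lee_fin.
apply: (@le_trans _ _ (\int[P]_x (v x + d2%:E))).
  by apply: ge0_le_integral => //; exact: emeasurable_funD.
rewrite ge0_integralD //; try by move=> x _; rewrite lee_fin.
rewrite integral_cst //.
set pm := (X in (_%:E * X)%E).
have -> : pm = 1 by rewrite /pm; exact: probability_setT.
rewrite mule1 EFinD addeA; apply: leeD2r.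
apply: (le_trans (dp_fun hPQ mv v0 v1)); apply: leeD2r.
rewrite expRD EFinM -muleA lee_wpmul2l ?lee_fin ?expR_ge0 //.
rewrite -ge0_integralZl //; try by rewrite lee_fin expR_ge0.
apply: ge0_le_integral => //; first exact: measurable_funeM.
by move=> x _; rewrite /v ge_min lexx orbT.
Qed.

End Helpers.

Theorem theorem5 (R : realType) (X : choiceType)
    (dF dH : measure_display) (F : measurableType dF) (H : measurableType dH)
    (Phi : seq X -> probability F R)
    (A : seq X -> R.-pker F ~> H)
    (M : seq X -> X -> R.-pker (F * H) ~> H)
    (eps_DP delta_DP eps_CR delta_CR : R) :
  0 <= eps_DP -> 0 <= delta_DP -> 0 <= eps_CR -> 0 <= delta_CR ->
  differentially_private Phi eps_DP delta_DP ->
  (forall phi : F, certified_removal (M_phi A M phi) (A_phi A phi) eps_CR delta_CR) ->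
  certified_removal (full_removal Phi A M) (full_train Phi A)
    (eps_DP + eps_CR) (delta_DP + delta_CR).
Proof.
move=> eDP dDP eCR dCR hDP hCR T mT D x xD.
set D' := dremove D x.
have dif1 : differ_in_one D D' by exists x; left; split => //; exact: perm_refl.
have dif2 : differ_in_one D' D by exists x; right; split => //; exact: perm_refl.
pose g phi := M_phi A M phi D x T.
pose f phi := A D' phi T.
have mf : measurable_fun setT f by exact: (measurable_kernel (A D') T mT).
have mg : measurable_fun setT g by exact: (measurable_fun_mkcomp_sfinite (A D) (M D x) mT).
have f0 phi : (0 <= f phi)%E by [].
have g0 phi : (0 <= g phi)%E by apply: integral_ge0.
have f1 phi : (f phi <= 1)%E.
  apply: le_trans (sprob_kernel_le1 (A D') phi).
  by apply: le_measure => //; rewrite inE.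
have g1 phi : (g phi <= 1)%E.
  rewrite /g /M_phi; apply: (@le_trans _ _ (\int[A D phi]_h (cst 1 h))%E).
    apply: ge0_le_integral => //.
      exact: (measurableT_comp (measurable_kernel (M D x) T mT)).
    move=> h _; apply: le_trans (sprob_kernel_le1 (M D x) (phi, h)).
    by apply: le_measure => //; rewrite inE.
  by rewrite integral_cst // mul1e; exact: sprob_kernel_le1.
move=> /=.
split.
- apply: (key (hDP D D' dif1) mg mf g0 g1 f0 dCR).
  by move=> phi; have [] := hCR phi T mT D x xD.
- apply: (key (hDP D' D dif2) mf mg f0 f1 g0 dCR).
  by move=> phi; have [] := hCR phi T mT D x xD.
Qed.
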